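(* Let $G$ be a finite group and $S$ one of the sporadic groups $Suz, HS, McL, He, HN, Th, O'N, Ly, Ru$. If $|G| = |S|$, then $G$ is neither a Frobenius group nor a 2-Frobenius group.
   Context: A finite group $G$ is a 2-Frobenius group if it has a normal series $1 \trianglelefteq A \trianglelefteq B \trianglelefteq G$ such that $B$ is a Frobenius group with Frobenius kernel $A$ and $G/A$ is a Frobenius group with Frobenius kernel $B/A$. Orders: $|Suz|=2^{13}\cdot3^7\cdot5^2\cdot7\cdot11\cdot13$, $|HS|=2^9\cdot3^2\cdot5^3\cdot7\cdot11$, $|McL|=2^7\cdot3^6\cdot5^3\cdot7\cdot11$, $|He|=2^{10}\cdot3^3\cdot5^2\cdot7^3\cdot17$, $|HN|=2^{14}\cdot3^6\cdot5^6\cdot7\cdot11\cdot19$, $|Th|=2^{15}\cdot3^{10}\cdot5^3\cdot7^2\cdot13\cdot19\cdot31$, $|O'N|=2^9\cdot3^4\cdot5\cdot7^3\cdot11\cdot19\cdot31$, $|Ly|=2^8\cdot3^7\cdot5^6\cdot7\cdot11\cdot31\cdot37\cdot67$, $|Ru|=2^{14}\cdot3^3\cdot5^3\cdot7\cdot13\cdot29$. *)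

(* Defs.v *)
From mathcomp Require Import all_boot all_fingroup all_solvable.
Set Implicit Arguments. Unset Strict Implicit. Unset Printing Implicit Defensive.
Local Open Scope group_scope.

Definition two_Frobenius (gT : finGroupType) (G : {group gT}) : Prop :=
  exists (A B : {group gT}),
    [/\ A <| G, B <| G, A \subset B,
        [Frobenius B with kernel A] & [Frobenius (G / A) with kernel (B / A)]].

Definition order_Suz : nat := 2^13 * 3^7 * 5^2 * 7 * 11 * 13.
Definition order_HS  : nat := 2^9 * 3^2 * 5^3 * 7 * 11.
Definition order_McL : nat := 2^7 * 3^6 * 5^3 * 7 * 11.
Definition order_He  : nat := 2^10 * 3^3 * 5^2 * 7^3 * 17.
Definition order_HN  : nat := 2^14 * 3^6 * 5^6 * 7 * 11 * 19.
Definition order_Th  : nat := 2^15 * 3^10 * 5^3 * 7^2 * 13 * 19 * 31.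
Definition order_ON  : nat := 2^9 * 3^4 * 5 * 7^3 * 11 * 19 * 31.
Definition order_Ly  : nat := 2^8 * 3^7 * 5^6 * 7 * 11 * 31 * 37 * 67.
Definition order_Ru  : nat := 2^14 * 3^3 * 5^3 * 7 * 13 * 29.

Definition sporadic_orders : seq nat :=
  [:: order_Suz; order_HS; order_McL; order_He; order_HN;
      order_Th; order_ON; order_Ly; order_Ru].

(* Main.v *)
From Stdlib Require Import Arith NArith.
Require Import Defs.
From mathcomp Require Import all_boot all_fingroup all_solvable.
From mathcomp Require vcharacter.

Definition Npw (a b : nat) : N := N.pow (N.of_nat a) (N.of_nat b).
Definition dP (q e p i : nat) : bool := N.eqb (N.modulo (N.sub (Npw p i) 1) (Npw q e)) 0.

Lemma powE (p i : nat) : Nat.pow p i = p ^ i.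
Proof. elim: i => [|i IH] //=; by rewrite IH expnS multE. Qed.

Lemma modE (x m : nat) : 0 < m -> N.eqb (N.modulo (N.of_nat x) (N.of_nat m)) 0 = (m %| x).
Proof.
move=> m0; rewrite -Nat2N.inj_mod.
apply/idP/idP.
- move/N.eqb_spec => h. have h' : Nat.modulo x m = 0%nat by apply Nat2N.inj; rewrite h.
  apply/dvdnP. have := (proj1 (Nat.Lcm0.mod_divide x m)) h'.
  by case=> z ->; exists z; rewrite multE.
- case/dvdnP=> z ->. apply/N.eqb_spec.
  rewrite -multE Nat.Div0.mod_mul. by [].
Qed.

Lemma dPE q e p i : 0 < q -> dP q e p i = (q ^ e %| (p ^ i).-1).
Proof.
move=> q0; rewrite /dP /Npw -!Nat2N.inj_pow !powE -(Nat2N.inj_sub _ 1) -modE ?expn_gt0 ?q0 //.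
by rewrite -subn1.
Qed.
Definition PF (fl : seq (nat * nat)) := \prod_(x <- fl) x.1 ^ x.2.

Lemma PF_p'nat fl r : all (fun x => prime x.1) fl -> prime r -> r \notin map fst fl -> r^'.-nat (PF fl).
Proof.
rewrite /PF; elim: fl => [|[p e] fl IH] /=; first by rewrite big_nil.
move=> /andP[pp ap] pr; rewrite in_cons negb_or => /andP[rp rfl].
rewrite big_cons pnatM pnatX pnatE // IH // andbT /=.
by rewrite !inE eq_sym rp.
Qed.

Lemma PF_gt0 fl : all (fun x => prime x.1) fl -> 0 < PF fl.
Proof.
rewrite /PF; elim: fl => [|[p e] fl IH] /=; first by rewrite big_nil.
move=> /andP[pp ap]; by rewrite big_cons muln_gt0 expn_gt0 prime_gt0 //= IH.
Qed.

Lemma PF_part fl r e : all (fun x => prime x.1) fl -> uniq (map fst fl) ->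
  (r, e) \in fl -> (PF fl)`_r = r ^ e.
Proof.
elim: fl => [|[p e'] fl IH] //=.
move=> /andP[pp ap] /andP[pnot ufl]; rewrite in_cons => /orP[/eqP[-> ->]|refl].
  rewrite /PF big_cons -/(PF fl) partnM ?expn_gt0 ?PF_gt0 ?prime_gt0 //.
  rewrite part_pnat_id ?pnatX ?pnat_id // part_p'nat ?muln1 //.
  exact: PF_p'nat.
have rin : r \in map fst fl by apply/mapP; exists (r, e).
have pr : prime r by move/allP: ap => /(_ _ refl).
rewrite /PF big_cons -/(PF fl) partnM ?expn_gt0 ?PF_gt0 ?prime_gt0 //.
rewrite (part_p'nat (n := p ^ e')) ?mul1n ?IH //.
rewrite pnatX pnatE // !inE; apply/orP; left.
by apply: contraNneq pnot => ->.
Qed.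

Lemma PF_prime fl r : all (fun x => prime x.1) fl -> prime r -> r %| PF fl -> r \in map fst fl.
Proof.
move=> ap pr rd; apply/negPn/negP => rn.
by move: (@PF_p'nat fl r ap pr rn); rewrite p'natE // rd.
Qed.
Fixpoint masks n : seq (seq bool) :=
  if n is n'.+1 then [seq b :: m | b <- [:: true; false], m <- masks n'] else [:: [::]].

Lemma masksP (m : seq bool) : m \in masks (size m).
Proof.
elim: m => [|b m IH] //.
change (b :: m \in [seq b :: m | b <- [:: true; false], m <- masks (size m)]).
apply/allpairsP; exists (b, m) => /=; split => //; by case: b.
Qed.

Lemma zip_self (T U : Type) (f : T -> U) (s : seq T) : zip s (map f s) = map (fun x => (x, f x)) s.
Proof. by elim: s => //= x s ->. Qed.

Definition bad1 (z : seq ((nat*nat)*bool)) : bool :=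
  [|| all (fun y => ~~ y.2) z, all (fun y => y.2) z |
   has (fun y => ~~ y.2 && has (fun y' => y'.2 && ~~ dP y'.1.1 y'.1.2 y.1.1 y.1.2) z) z].
Definition check1 fl := all (fun m => bad1 (zip fl m)) (masks (size fl)).

Definition allowed (z : seq ((nat*nat)*bool)) (p e i : nat) : bool :=
  (all (fun y' => y'.2 ==> dP y'.1.1 y'.1.2 p i) z) && (all (fun y' => y'.2 ==> dP p (e - i) y'.1.1 y'.1.2) z).
Definition bad2 (z : seq ((nat*nat)*bool)) : bool :=
 [|| all (fun y => ~~ y.2) z,
     has (fun y => ~~ y.2 && ~~ has (allowed z y.1.1 y.1.2) (iota 0 y.1.2.+1)) z,
     all (fun y => y.2 || all (fun i => allowed z y.1.1 y.1.2 i ==> (i == 0)) (iota 0 y.1.2.+1)) z |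
     all (fun y => y.2 || all (fun i => allowed z y.1.1 y.1.2 i ==> (i == y.1.2)) (iota 0 y.1.2.+1)) z].
Definition check2 fl := all (fun m => bad2 (zip fl m)) (masks (size fl)).

Section Arith.
Variable fl : seq (nat * nat).
Hypothesis ap : all (fun x => prime x.1) fl.
Hypothesis ufl : uniq (map fst fl).

Lemma in_fl r : prime r -> r %| PF fl -> exists2 x, x \in fl & r = x.1.
Proof. by move=> pr /(@PF_prime fl r ap pr) /mapP. Qed.

Lemma prime_fl x : x \in fl -> prime x.1.
Proof. by move/(allP ap). Qed.

Lemma part_fl x : x \in fl -> (PF fl)`_(x.1) = x.1 ^ x.2.
Proof. by case: x => p e; apply: (@PF_part fl p e ap ufl). Qed.

Lemma nodvd_cop p k h : prime p -> coprime k h -> p %| h -> ~~ (p %| k).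
Proof.
move=> pp co ph; rewrite -prime_coprime //; apply: coprime_dvdl ph _.
by rewrite coprime_sym.
Qed.

Theorem arith1 k h : check1 fl -> k * h = PF fl -> coprime k h -> 1 < k -> 1 < h ->
  (forall p q : nat, h`_q %| (k`_p).-1) -> False.
Proof.
move=> chk kh co k1 h1 Hdv.
have k0 : 0 < k by apply: ltnW. have h0 : 0 < h by apply: ltnW.
have Hk x : x \in fl -> ~~ (x.1 %| h) -> k`_(x.1) = x.1 ^ x.2.
  move=> xin nd; rewrite -part_fl // -kh partnM // (part_p'nat (n := h)) ?muln1 //.
  by rewrite p'natE ?prime_fl.
have Hh x : x \in fl -> x.1 %| h -> h`_(x.1) = x.1 ^ x.2.
  move=> xin d; rewrite -part_fl // -kh partnM // (part_p'nat (n := k)) ?mul1n //.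
  by rewrite p'natE ?prime_fl //; apply: nodvd_cop co d; apply: prime_fl.
have := masksP [seq x.1 %| h | x <- fl]; rewrite size_map => /(allP chk).
rewrite zip_self /bad1.
case/or3P => [allN | allT | /hasP [y /mapP[x xin ->] /= /andP[nb /hasP[y' /mapP[x' xin' ->] /= /andP[b' ndv]]]]].
- have pr := pdiv_prime h1.
  have dd : pdiv h %| PF fl by rewrite -kh (dvdn_trans (pdiv_dvd h)) ?dvdn_mull.
  have [x xin rx] := @in_fl _ pr dd.
  by move/allP: allN => /(_ _ (map_f (fun x => (x, x.1 %| h)) xin)) /=; rewrite -rx pdiv_dvd.
- have pr := pdiv_prime k1.
  have dd : pdiv k %| PF fl by rewrite -kh (dvdn_trans (pdiv_dvd k)) ?dvdn_mulr.
  have [x xin rx] := @in_fl _ pr dd.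
  move/allP: allT => /(_ _ (map_f (fun x => (x, x.1 %| h)) xin)) /=; rewrite -rx => rh.
  by move: (nodvd_cop _ _ _ pr co rh); rewrite pdiv_dvd.
- move: ndv; rewrite dPE ?prime_gt0 ?(prime_fl _ xin') //.
  by rewrite -(Hk x) // -(Hh x') // Hdv.
Qed.

Theorem arith2 a b c : check2 fl -> a * b * c = PF fl -> coprime a b -> coprime b c ->
  1 < a -> 1 < b -> 1 < c ->
  (forall p q : nat, b`_q %| (a`_p).-1) -> (forall p r : nat, c`_r %| (b`_p).-1) -> False.
Proof.
move=> chk abc coab cobc a1 b1 c1 Hd1 Hd2.
have a0 : 0 < a by apply: ltnW. have b0 : 0 < b by apply: ltnW. have c0 : 0 < c by apply: ltnW.
have Hn x : x \in fl -> a`_(x.1) * b`_(x.1) * c`_(x.1) = x.1 ^ x.2.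
  by move=> xin; rewrite -part_fl // -abc !partnM ?muln_gt0 ?a0 ?b0.
have Hb x : x \in fl -> x.1 %| b -> b`_(x.1) = x.1 ^ x.2.
  move=> xin d; rewrite -(Hn x xin) (part_p'nat (n := a)) ?(part_p'nat (n := c)) ?mul1n ?muln1 //.
    by rewrite p'natE ?prime_fl //; apply: nodvd_cop d; [apply: prime_fl | rewrite coprime_sym].
  by rewrite p'natE ?prime_fl //; apply: nodvd_cop coab d; apply: prime_fl.
have coba : coprime b a by rewrite coprime_sym.
pose z := [seq (x, x.1 %| b) | x <- fl].
have Hl x : x \in fl -> ~~ (x.1 %| b) ->
   logn x.1 a + logn x.1 c = x.2 /\ allowed z x.1 x.2 (logn x.1 a).
  move=> xin nd.
  have pp := prime_fl _ xin.
  have bp : b`_(x.1) = 1 by rewrite part_p'nat // p'natE.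
  have e1 : logn x.1 a + logn x.1 c = x.2.
    apply/eqP; rewrite -(eqn_exp2l _ _ (prime_gt1 pp)) expnD -!p_part -(Hn x xin) bp muln1.
    by [].
  split=> //; apply/andP; split; apply/allP => y' /mapP[x' x'in ->] /=; apply/implyP => d.
    by rewrite dPE ?prime_gt0 ?(prime_fl _ x'in) // -(Hb x') // -p_part; apply: Hd1.
  rewrite dPE ?prime_gt0 // -(Hb x') // -e1 addKn -p_part.
  exact: Hd2.
have := masksP [seq x.1 %| b | x <- fl]; rewrite size_map => /(allP chk).
rewrite zip_self -/z /bad2.
case/or4P => [allN | /hasP[y /mapP[x xin ->] /= /andP[nd noA]] | allA | allC].
- have pr := pdiv_prime b1.
  have dd : pdiv b %| PF fl by rewrite -abc (dvdn_trans (pdiv_dvd b)) // -mulnA dvdn_mull // dvdn_mulr.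
  have [x xin rx] := @in_fl _ pr dd.
  by move/allP: allN => /(_ _ (map_f (fun x => (x, x.1 %| b)) xin)) /=; rewrite -rx pdiv_dvd.
- have [e1 al] := Hl x xin nd.
  move/negP: noA; apply.
  change (has (allowed z x.1 x.2) (iota 0 x.2.+1)); apply/hasP; exists (logn x.1 a) => //.
  by rewrite mem_iota /= add0n ltnS -e1 leq_addr.
- have pr := pdiv_prime a1.
  have dd : pdiv a %| PF fl by rewrite -abc (dvdn_trans (pdiv_dvd a)) // -mulnA dvdn_mulr.
  have [x xin rx] := @in_fl _ pr dd.
  have nb : ~~ (x.1 %| b) by rewrite -rx; apply: (nodvd_cop _ _ _ pr coba); apply: pdiv_dvd.
  have [e1 al] := Hl x xin nb.
  move/allP: allA => /(_ _ (map_f (fun x => (x, x.1 %| b)) xin)).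
  case/orP => [/= d|/allP]; first by rewrite d in nb.
  move=> /(_ (logn x.1 a)); rewrite al mem_iota /= add0n ltnS -e1 leq_addr => /(_ isT) /eqP.
  have : 0 < logn x.1 a by rewrite logn_gt0 mem_primes a0 -rx pr pdiv_dvd.
  by move=> /[swap] ->.
- have pr := pdiv_prime c1.
  have dd : pdiv c %| PF fl by rewrite -abc (dvdn_trans (pdiv_dvd c)) // dvdn_mull.
  have [x xin rx] := @in_fl _ pr dd.
  have nb : ~~ (x.1 %| b) by rewrite -rx; apply: (nodvd_cop _ _ _ pr cobc); apply: pdiv_dvd.
  have [e1 al] := Hl x xin nb.
  move/allP: allC => /(_ _ (map_f (fun x => (x, x.1 %| b)) xin)).
  case/orP => [/= d|/allP]; first by rewrite d in nb.
  move=> /(_ (logn x.1 a)); rewrite al mem_iota /= add0n ltnS -e1 leq_addr => /(_ isT).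
  rewrite -{1}(addn0 (logn x.1 a)) eqn_add2l eq_sym.
  have : 0 < logn x.1 c by rewrite logn_gt0 mem_primes c0 -rx pr pdiv_dvd.
  by move=> /[swap] /eqP ->.
Qed.
End Arith.

Definition flSuz := [:: (2,13); (3,7); (5,2); (7,1); (11,1); (13,1)].
Definition flHS  := [:: (2,9); (3,2); (5,3); (7,1); (11,1)].
Definition flMcL := [:: (2,7); (3,6); (5,3); (7,1); (11,1)].
Definition flHe  := [:: (2,10); (3,3); (5,2); (7,3); (17,1)].
Definition flHN  := [:: (2,14); (3,6); (5,6); (7,1); (11,1); (19,1)].
Definition flTh  := [:: (2,15); (3,10); (5,3); (7,2); (13,1); (19,1); (31,1)].
Definition flON  := [:: (2,9); (3,4); (5,1); (7,3); (11,1); (19,1); (31,1)].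
Definition flLy  := [:: (2,8); (3,7); (5,6); (7,1); (11,1); (31,1); (37,1); (67,1)].
Definition flRu  := [:: (2,14); (3,3); (5,3); (7,1); (13,1); (29,1)].

Definition goodfl fl := [&& all (fun x => prime x.1) fl, uniq (map fst fl), check1 fl & check2 fl].

Lemma all_good : all goodfl [:: flSuz; flHS; flMcL; flHe; flHN; flTh; flON; flLy; flRu].
Proof. vm_compute. reflexivity. Qed.

Lemma orders_fl n : n \in sporadic_orders -> exists2 fl, goodfl fl & n = PF fl.
Proof.
have G := all_good; move/allP: G => G.
rewrite /sporadic_orders.
rewrite in_cons; case/predU1P => [->|]; first (exists flSuz; first by apply: G; rewrite !inE eqxx).
  rewrite /order_Suz /PF /flSuz !big_cons big_nil.
  change (2^13 * 3^7 * 5^2 * 7 * 11 * 13 = 2^13 * (3^7 * (5^2 * (7^1 * (11^1 * (13^1 * 1)))))).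
  rewrite !expn1 muln1; generalize (2^13) (3^7) (5^2) 7 11 13 => *; by rewrite !mulnA.
rewrite in_cons; case/predU1P => [->|]; first (exists flHS; first by apply: G; rewrite !inE eqxx !orbT).
  rewrite /order_HS /PF /flHS !big_cons big_nil.
  change (2^9 * 3^2 * 5^3 * 7 * 11 = 2^9 * (3^2 * (5^3 * (7^1 * (11^1 * 1))))).
  rewrite !expn1 muln1; generalize (2^9) (3^2) (5^3) 7 11 => *; by rewrite !mulnA.
rewrite in_cons; case/predU1P => [->|]; first (exists flMcL; first by apply: G; rewrite !inE eqxx !orbT).
  rewrite /order_McL /PF /flMcL !big_cons big_nil.
  change (2^7 * 3^6 * 5^3 * 7 * 11 = 2^7 * (3^6 * (5^3 * (7^1 * (11^1 * 1))))).
  rewrite !expn1 muln1; generalize (2^7) (3^6) (5^3) 7 11 => *; by rewrite !mulnA.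
rewrite in_cons; case/predU1P => [->|]; first (exists flHe; first by apply: G; rewrite !inE eqxx !orbT).
  rewrite /order_He /PF /flHe !big_cons big_nil.
  change (2^10 * 3^3 * 5^2 * 7^3 * 17 = 2^10 * (3^3 * (5^2 * (7^3 * (17^1 * 1))))).
  rewrite !expn1 muln1; generalize (2^10) (3^3) (5^2) (7^3) 17 => *; by rewrite !mulnA.
rewrite in_cons; case/predU1P => [->|]; first (exists flHN; first by apply: G; rewrite !inE eqxx !orbT).
  rewrite /order_HN /PF /flHN !big_cons big_nil.
  change (2^14 * 3^6 * 5^6 * 7 * 11 * 19 = 2^14 * (3^6 * (5^6 * (7^1 * (11^1 * (19^1 * 1)))))).
  rewrite !expn1 muln1; generalize (2^14) (3^6) (5^6) 7 11 19 => *; by rewrite !mulnA.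
rewrite in_cons; case/predU1P => [->|]; first (exists flTh; first by apply: G; rewrite !inE eqxx !orbT).
  rewrite /order_Th /PF /flTh !big_cons big_nil.
  change (2^15 * 3^10 * 5^3 * 7^2 * 13 * 19 * 31 = 2^15 * (3^10 * (5^3 * (7^2 * (13^1 * (19^1 * (31^1 * 1))))))).
  rewrite !expn1 muln1; generalize (2^15) (3^10) (5^3) (7^2) 13 19 31 => *; by rewrite !mulnA.
rewrite in_cons; case/predU1P => [->|]; first (exists flON; first by apply: G; rewrite !inE eqxx !orbT).
  rewrite /order_ON /PF /flON !big_cons big_nil.
  change (2^9 * 3^4 * 5 * 7^3 * 11 * 19 * 31 = 2^9 * (3^4 * (5^1 * (7^3 * (11^1 * (19^1 * (31^1 * 1))))))).
  rewrite !expn1 muln1; generalize (2^9) (3^4) 5 (7^3) 11 19 31 => *; by rewrite !mulnA.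
rewrite in_cons; case/predU1P => [->|]; first (exists flLy; first by apply: G; rewrite !inE eqxx !orbT).
  rewrite /order_Ly /PF /flLy !big_cons big_nil.
  change (2^8 * 3^7 * 5^6 * 7 * 11 * 31 * 37 * 67 = 2^8 * (3^7 * (5^6 * (7^1 * (11^1 * (31^1 * (37^1 * (67^1 * 1)))))))).
  rewrite !expn1 muln1; generalize (2^8) (3^7) (5^6) 7 11 31 37 67 => *; by rewrite !mulnA.
rewrite mem_seq1 => /eqP->; exists flRu; first by apply: G; rewrite !inE eqxx !orbT.
  rewrite /order_Ru /PF /flRu !big_cons big_nil.
  change (2^14 * 3^3 * 5^3 * 7 * 13 * 29 = 2^14 * (3^3 * (5^3 * (7^1 * (13^1 * (29^1 * 1)))))).
  rewrite !expn1 muln1; generalize (2^14) (3^3) (5^3) 7 13 29 => *; by rewrite !mulnA.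
Qed.

Local Open Scope group_scope.
Lemma frob_part (gT : finGroupType) (G K H : {group gT}) (p q : nat) :
  [Frobenius G = K ><| H] -> #|H|`_q %| (#|K|`_p).-1.
Proof.
move=> frobG.
have [defG ntK ntH _ _] := Frobenius_context frobG.
have [Q sylQ] := Sylow_exists q H.
have sQH := pHall_sub sylQ.
have [_ /mulG_sub [sKG sHG] nKH _] := sdprodP defG.
have nKQ : Q \subset 'N(K) := subset_trans sQH nKH.
have coKQ : coprime #|K| #|Q| := coprime_dvdr (cardSg sQH) (Frobenius_coprime frobG).
have solQ : solvable Q := nilpotent_sol (pgroup_nil (pHall_pgroup sylQ)).
have [P sylP nPQ] := sol_coprime_Sylow_exists p solQ nKQ coKQ.
have regPQ : semiregular P Q := semiregularS (pHall_sub sylP) sQH (Frobenius_reg_ker frobG).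
rewrite -(card_Hall sylQ) -(card_Hall sylP).
exact: regular_norm_dvd_pred nPQ regPQ.
Qed.


Theorem lemma2p13 (gT : finGroupType) (G : {group gT}) :
  #|G| \in sporadic_orders ->
  ~ [Frobenius G] /\ ~ two_Frobenius G.
Proof.
move/orders_fl=> [fl /and4P[ap ufl c1 c2] nG].
split.
- move=> /existsP[H frobH].
  have [K frobK] := vcharacter.Frobenius_kernel_exists frobH.
  have [defG ntK ntH _ _] := Frobenius_context frobK.
  apply: (@arith1 fl ap ufl #|K| #|H|) => //.
  + by rewrite (sdprod_card defG).
  + exact: Frobenius_coprime frobK.
  + by rewrite cardG_gt1.
  + by rewrite cardG_gt1.
  + by move=> p q; apply: frob_part frobK.
- case=> A [B] [nAG nBG sAB /existsP[H frobB] /existsP[C frobQ]].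
  have [defB ntA ntH _ _] := Frobenius_context frobB.
  have [defQ ntBA ntC _ _] := Frobenius_context frobQ.
  have nAB : B \subset 'N(A) := subset_trans (normal_sub nBG) (normal_norm nAG).
  have cBA : #|B / A| = #|H|.
    rewrite card_quotient //; apply/eqP; rewrite -(eqn_pmul2l (cardG_gt0 A)).
    by rewrite Lagrange // (sdprod_card defB).
  apply: (@arith2 fl ap ufl #|A| #|H| #|C|) => //.
  + rewrite -nG -cBA -mulnA (sdprod_card defQ) card_quotient ?normal_norm //.
    by rewrite Lagrange ?normal_sub.
  + exact: Frobenius_coprime frobB.
  + by rewrite -cBA; exact: Frobenius_coprime frobQ.
  + by rewrite cardG_gt1.
  + by rewrite cardG_gt1.
  + by rewrite cardG_gt1.
  + by move=> p q; apply: frob_part frobB.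
  + by move=> p r; rewrite -cBA; apply: frob_part frobQ.
Qed.
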